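(* For every first-order formula $\phi$ of BID-logic there is a formula $\psi$ of $\mathbf{ID}$ such that $\phi\equiv\psi$, i.e. for every suitable structure $M$ and every team $X$ of $M$ with $dom(X)\supseteq Fv(\phi)\cup Fv(\psi)$, $M\models_X\phi$ if and only if $M\models_X\psi$.
   Context: Fix a first-order signature; structures have non-empty domains. An assignment on $M$ is a function from a finite set of variables into the domain of $M$; $s(a/x)$ agrees with $s$ except that it sends $x$ to $a$. A team $X$ of $M$ is a set of assignments all with the same domain $dom(X)$. For $F:X\to M$, $X(F/x)=\{s(F(s)/x):s\in X\}$; $X(M/x)=\{s(a/x):a\in M,s\in X\}$. Formulas of BID-logic: $\phi::=\alpha\mid=\!\!(t_1,\dots,t_n)\mid\neg=\!\!(t_1,\dots,t_n)\mid\bot\mid\phi\wedge\phi\mid\phi\otimes\phi\mid\phi\veebar\phi\mid\phi\to\phi\mid\phi\multimap\phi\mid\forall x\phi\mid\exists x\phi$, with $\alpha$ a first-order literal (atomic or negated atomic formula) and $t_i$ terms; $Fv(=\!\!(t_1,\dots,t_n))$ is the set of variables in the $t_i$, otherwise free variables as usual. Semantics for teams $X$ with $dom(X)\supseteq$ free variables: $M\models_X\alpha$ iff $M\models_s\alpha$ for all $s\in X$; $M\models_X=\!\!(t_1,\dots,t_n)$ iff for all $s,s'\in X$ with $s(t_i)=s'(t_i)$ for all $i<n$, $s(t_n)=s'(t_n)$; $M\models_X\neg=\!\!(\dots)$ iff $X=\emptyset$; $M\models_X\bot$ iff $X=\emptyset$; $\wedge$ as usual; $M\models_X\phi\otimes\psi$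 iff $X=Y\cup Z$ for some $Y,Z\subseteq X$ with $M\models_Y\phi$, $M\models_Z\psi$; $M\models_X\phi\veebar\psi$ iff $M\models_X\phi$ or $M\models_X\psi$; $M\models_X\phi\to\psi$ iff for all $Y\subseteq X$, $M\models_Y\phi$ implies $M\models_Y\psi$; $M\models_X\phi\multimap\psi$ iff for all teams $Y$ with $dom(Y)=dom(X)$, $M\models_Y\phi$ implies $M\models_{X\cup Y}\psi$; $M\models_X\exists x\phi$ iff $M\models_{X(F/x)}\phi$ for some $F:X\to M$; $M\models_X\forall x\phi$ iff $M\models_{X(M/x)}\phi$. A first-order formula of BID-logic is one built from first-order literals using only $\wedge,\otimes,\forall x,\exists x$. $\mathbf{ID}$ formulas are those generated by $\phi::=\alpha\mid=\!\!(t)\mid\bot\mid\phi\wedge\phi\mid\phi\veebar\phi\mid\phi\to\phi\mid\forall x\phi\mid\exists x\phi$ with $\alpha$ a first-order atomic formula and $t$ a term. *)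

(* Defs.v *)
From Stdlib Require Import List Arith Bool Vectors.Fin.
Import ListNotations.

Set Implicit Arguments.

Record signature : Type := Signature {
  fsym : Type; farity : fsym -> nat;
  rsym : Type; rarity : rsym -> nat }.

Inductive term (S : signature) : Type :=
| Var (x : nat)
| App (f : fsym S) (args : Fin.t (farity S f) -> term S).
Arguments Var {S} x.

Inductive atom (S : signature) : Type :=
| ARel (r : rsym S) (args : Fin.t (rarity S r) -> term S)
| AEq (t1 t2 : term S).

(* BID-logic formulas.  [Dep ts t] is  =(ts, t), i.e. =(t_1,...,t_{n-1},t_n)
   with ts = [t_1; ...; t_{n-1}] and t = t_n (so n >= 1). *)
Inductive formula (S : signature) : Type :=
| Pos (a : atom S)
| Neg (a : atom S)
| Dep (ts : list (term S)) (t : term S)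
| NDep (ts : list (term S)) (t : term S)
| Bot
| And (p q : formula S)
| Tensor (p q : formula S)
| Vee (p q : formula S)
| Imp (p q : formula S)
| Lolli (p q : formula S)
| All (x : nat) (p : formula S)
| Ex (x : nat) (p : formula S).
Arguments Bot {S}.

Record structure (S : signature) : Type := Structure {
  carrier : Type;
  elt0 : carrier;
  fint : forall f : fsym S, (Fin.t (farity S f) -> carrier) -> carrier;
  rint : forall r : rsym S, (Fin.t (rarity S r) -> carrier) -> Prop }.

Definition assignment S (M : structure S) := nat -> option (carrier M).

Definition has_dom S (M : structure S) (V : list nat) (s : assignment M) : Prop :=
  forall x, s x <> None <-> In x V.

Definition is_team S (M : structure S) (V : list nat) (X : assignment M -> Prop) : Prop :=
  forall s, X s -> has_dom V s.

Definition upd S (M : structure S) (s : assignment M) (x : nat) (a : carrier M)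
  : assignment M := fun y => if Nat.eqb y x then Some a else s y.

(* Value of a term (the default [elt0] is never used when dom(s) ⊇ vars). *)
Fixpoint eval S (M : structure S) (s : assignment M) (t : term S) : carrier M :=
  match t with
  | Var x => match s x with Some a => a | None => elt0 M end
  | App f args => fint M f (fun i => eval s (args i))
  end.

Definition holds_atom S (M : structure S) (s : assignment M) (a : atom S) : Prop :=
  match a with
  | ARel r args => rint M r (fun i => eval s (args i))
  | AEq t1 t2 => eval s t1 = eval s t2
  end.

Fixpoint occurs S (x : nat) (t : term S) : Prop :=
  match t with
  | Var y => x = y
  | App f args => exists i, occurs x (args i)
  end.

Definition occurs_atom S (x : nat) (a : atom S) : Prop :=
  match a with
  | ARel r args => exists i, occurs x (args i)
  | AEq t1 t2 => occurs x t1 \/ occurs x t2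
  end.

Fixpoint free S (x : nat) (p : formula S) : Prop :=
  match p with
  | Pos a | Neg a => occurs_atom x a
  | Dep ts t | NDep ts t => Exists (occurs x) ts \/ occurs x t
  | Bot => False
  | And p q | Tensor p q | Vee p q | Imp p q | Lolli p q => free x p \/ free x q
  | All y p | Ex y p => x <> y /\ free x p
  end.

Fixpoint sat S (M : structure S) (V : list nat) (X : assignment M -> Prop)
  (p : formula S) {struct p} : Prop :=
  match p with
  | Pos a => forall s, X s -> holds_atom s a
  | Neg a => forall s, X s -> ~ holds_atom s a
  | Dep ts t => forall s s', X s -> X s' ->
      Forall (fun u => eval s u = eval s' u) ts -> eval s t = eval s' t
  | NDep ts t => forall s, ~ X s
  | Bot => forall s, ~ X s
  | And p q => sat V X p /\ sat V X q
  | Tensor p q => exists Y Z : assignment M -> Prop,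
      (forall s, Y s -> X s) /\ (forall s, Z s -> X s) /\
      (forall s, X s -> Y s \/ Z s) /\ sat V Y p /\ sat V Z q
  | Vee p q => sat V X p \/ sat V X q
  | Imp p q => forall Y : assignment M -> Prop,
      (forall s, Y s -> X s) -> sat V Y p -> sat V Y q
  | Lolli p q => forall Y : assignment M -> Prop,
      is_team V Y -> sat V Y p -> sat V (fun s => X s \/ Y s) q
  | All x p => sat (x :: V) (fun t => exists s a, X s /\ t = upd s x a) p
  | Ex x p => exists F : assignment M -> carrier M,
      sat (x :: V) (fun t => exists s, X s /\ t = upd s x (F s)) p
  end.

Fixpoint is_FO S (p : formula S) : Prop :=
  match p with
  | Pos _ | Neg _ => True
  | And p q | Tensor p q => is_FO p /\ is_FO q
  | All _ p | Ex _ p => is_FO p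
  | _ => False
  end.

Fixpoint is_ID S (p : formula S) : Prop :=
  match p with
  | Pos _ => True
  | Dep ts _ => ts = nil
  | Bot => True
  | And p q | Vee p q | Imp p q => is_ID p /\ is_ID q
  | All _ p | Ex _ p => is_ID p
  | _ => False
  end.

(* Main.v *)
Require Import Defs.
From Stdlib Require Import List Classical ClassicalEpsilon.

Fixpoint tr S (M : structure S) (p : formula S) (s : assignment M) : Prop :=
  match p with
  | Pos a => holds_atom s a
  | Neg a => ~ holds_atom s a
  | And p q => tr S M p s /\ tr S M q s
  | Tensor p q => tr S M p s \/ tr S M q s
  | All x p => forall a, tr S M p (upd s x a)
  | Ex x p => exists a, tr S M p (upd s x a)
  | _ => True
  end.

Arguments tr {S M} p s.
Fixpoint T S (p : formula S) : formula S :=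
  match p with
  | Neg a => Imp (Pos a) Bot
  | And p q => And (T S p) (T S q)
  | Tensor p q => Imp (Imp (T S p) Bot) (T S q)
  | All x p => All x (T S p)
  | Ex x p => Ex x (T S p)
  | p => p
  end.

Arguments T {S} p.
Lemma T_ID S (p : formula S) : is_FO p -> is_ID (T p).
Proof. induction p; simpl; tauto. Qed.

Lemma ex_case S (M : structure S) (x : nat) (P : assignment M -> Prop) (V : list nat)
  (X : assignment M -> Prop) (f : formula S)
  (IH : forall V X, sat V X f <-> forall s, X s -> P s) :
  (exists F : assignment M -> carrier M,
      sat (x :: V) (fun t => exists s, X s /\ t = upd s x (F s)) f)
  <-> forall s, X s -> exists a, P (upd s x a).
Proof.
  split.
  - intros [F HF] s Hs. rewrite IH in HF. exists (F s). apply HF. eauto.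
  - intros H.
    exists (fun s => epsilon (inhabits (elt0 M)) (fun a => P (upd s x a))).
    rewrite IH. intros t [s [Hs ->]].
    apply (epsilon_spec (inhabits (elt0 M)) (fun a => P (upd s x a))). auto.
Qed.

Lemma all_case S (M : structure S) (x : nat) (P : assignment M -> Prop) (V : list nat)
  (X : assignment M -> Prop) (f : formula S)
  (IH : forall V X, sat V X f <-> forall s, X s -> P s) :
  sat (x :: V) (fun t => exists s a, X s /\ t = upd s x a) f
  <-> forall s, X s -> forall a, P (upd s x a).
Proof.
  rewrite IH. split.
  - intros H s Hs a. apply H. eauto.
  - intros H t [s [a [Hs ->]]]. auto.
Qed.

Lemma FO_sat S (p : formula S) : is_FO p ->
  forall (M : structure S) V (X : assignment M -> Prop),
    (sat V X p <-> forall s, X s -> tr p s) /\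
    (sat V X (T p) <-> forall s, X s -> tr p s).
Proof.
  induction p; simpl; intros Hfo M V X; try tauto.
  - split; [tauto|]. split.
    + intros H s Hs Ha. apply (H (fun t => t = s)) with s; auto.
      * intros; subst; auto.
      * intros; subst; auto.
    + intros H Y HY HYa s Ys. apply (H s (HY s Ys)). auto.
  - destruct Hfo as [H1 H2].
    destruct (IHp1 H1 M V X) as [A1 B1]; destruct (IHp2 H2 M V X) as [A2 B2].
    rewrite A1, A2, B1, B2. split; split; intros H; try split; intros; try apply H; auto;
    try (destruct H as [Ha Hb]; split; auto).
  - destruct Hfo as [H1 H2]. split.
    + split.
      * intros [Y [Z [HY [HZ [HU [SY SZ]]]]]] s Hs.
        pose proof (proj1 (proj1 (IHp1 H1 M V Y)) SY) as SY'.
        pose proof (proj1 (proj1 (IHp2 H2 M V Z)) SZ) as SZ'.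
        destruct (HU s Hs); auto.
      * intros H. exists (fun s => X s /\ tr p1 s), (fun s => X s /\ tr p2 s).
        repeat split; try tauto.
        -- intros s Hs. destruct (H s Hs); auto.
        -- apply (proj2 (proj1 (IHp1 H1 M V _))). tauto.
        -- apply (proj2 (proj1 (IHp2 H2 M V _))). tauto.
    + split.
      * intros H s Hs. destruct (classic (tr p1 s)) as [h|h]; [left; auto|right].
        assert (K := H (fun t => t = s) ltac:(simpl; intros ? ->; auto)).
        rewrite (proj2 (IHp2 H2 M V _)) in K. apply K; auto.
        intros Y' HY' HS t Yt. apply h. rewrite (proj2 (IHp1 H1 M V _)) in HS.
        rewrite <- (HY' t Yt). auto.
      * intros H Y HY Hn. rewrite (proj2 (IHp2 H2 M V _)). intros s Ys.
        destruct (H s (HY s Ys)) as [h|h]; auto. exfalso.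
        apply (Hn (fun t => t = s)) with s; auto.
        -- simpl; intros ? ->; auto.
        -- rewrite (proj2 (IHp1 H1 M V _)). simpl; intros ? ->; auto.
  - split.
    + apply all_case. intros; apply IHp; auto.
    + apply all_case. intros; apply IHp; auto.
  - split.
    + apply ex_case. intros; apply IHp; auto.
    + apply ex_case. intros; apply IHp; auto.
Qed.

Theorem theorem3p4 :
  forall (S : signature) (phi : formula S), is_FO phi ->
  exists psi : formula S, is_ID psi /\
    forall (M : structure S) (V : list nat) (X : assignment M -> Prop),
      is_team V X ->
      (forall x, free x phi \/ free x psi -> In x V) ->
      (sat V X phi <-> sat V X psi).
Proof.
  intros S phi H. exists (T phi). split; [apply T_ID; auto|].
  intros M V X _ _. destruct (@FO_sat S phi H M V X) as [A B]. rewrite A, B. tauto.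
Qed.
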